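(* Suppose $S(Y)$ is such that for every $z\in S(Y)$ there exists a strict ordering $P$ of $Y$ with $z_j\in\overline{W}(Y,P)$ for all $j\in\{1,\dots,m\}$, where $z_j=(z_{j,d(y)})_{y\in Y}$. If an ensemble choice aggregator $C$ satisfies ensemble unanimity, then $C$ respects model choice reversal.
   Context: Let $Y$ be a nonempty set of labels and $m\ge 2$ an integer (the number of models). For each $j\in\{1,\dots,m\}$ let $S_j(Y)\subseteq\mathbb{R}^{|Y|}$ be a set of score vectors whose coordinates are indexed by labels (write $w_{d(y)}$ for the coordinate of $w$ corresponding to label $y$), and let $S(Y)=\prod_{j=1}^m S_j(Y)$. An element $z\in S(Y)$ is written $z=(z_{j,d(y)})_{j,y}$, where $z_{j,d(y)}$ denotes model $j$'s score for label $y$. For a strict (total) ordering $P$ of $Y$, $\overline{W}(Y,P)=\{w\in\mathbb{R}^{|Y|}: \text{for all } y,y'\in Y,\ y\,P\,y' \iff w_{d(y)}>w_{d(y')}\}$. An ensemble choice aggregator is a set-valued function $C:(2^Y\setminus\{\emptyset\})\times S(Y)\to 2^Y\setminus\{\emptyset\}$ such that for every nonempty $Y^*\subseteq Y$ and every $z\in S(Y)$: (i) $C(Y^*,z)\subseteq Y^*$; and (ii) for every $y\in Y^*$, if there does not exist $y'\in Y^*$ with $\{y'\}=C(\{y,y'\},z)$, then $y\in C(Y^*,z)$. Ensemble unanimity: for all $y,y'\in Y$ and all $z\in S(Y)$, if $z_{j,d(y)}>z_{j,d(y')}$ for all $j$ then $\{y\}=C(\{y,y'\},z)$. Model choice reversal: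 for all $y,y'\in Y$ and all $z,z'\in S(Y)$, whenever $y\in C(\{y,y'\},z)$, $y'\notin C(\{y,y'\},z)$ and $y'\in C(\{y,y'\},z')$, there exists $j$ with $z_{j,d(y)}>z_{j,d(y')}$ and $z'_{j,d(y)}<z'_{j,d(y')}$. *)

(* Defs.v *)
From mathcomp Require Import all_boot all_order all_algebra.
From mathcomp Require Import reals.
Set Implicit Arguments. Unset Strict Implicit. Unset Printing Implicit Defensive.
Import Order.TTheory GRing.Theory Num.Theory.
Local Open Scope ring_scope.

Section Defs.
Variables (R : realType) (Y : finType) (m : nat).

(* A score vector in R^{|Y|} is represented as a function Y -> R;
   w y is the coordinate w_{d(y)}. *)
Definition scorevec := Y -> R.
(* An element z of S(Y) = prod_j S_j(Y): z j y = z_{j,d(y)}. *)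
Definition profile := 'I_m -> scorevec.

Definition inS (Sj : 'I_m -> scorevec -> Prop) (z : profile) : Prop :=
  forall j, Sj j (z j).

Definition strict_ordering (P : Y -> Y -> Prop) : Prop :=
  (forall y, ~ P y y) /\
  (forall x y w, P x y -> P y w -> P x w) /\
  (forall y y', y <> y' -> P y y' \/ P y' y).

Definition Wbar (P : Y -> Y -> Prop) (w : scorevec) : Prop :=
  forall y y', P y y' <-> w y' < w y.

Definition ensemble_choice_aggregator (Sj : 'I_m -> scorevec -> Prop)
  (C : {set Y} -> profile -> {set Y}) : Prop :=
  forall (Ystar : {set Y}) (z : profile), Ystar != set0 -> inS Sj z ->
    [/\ C Ystar z != set0,
        C Ystar z \subset Ystar &
        forall y, y \in Ystar ->
          ~ (exists y', [/\ y' \in Ystar, y' != y & [set y'] = C [set y; y'] z]) ->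
          y \in C Ystar z].

Definition ensemble_unanimity (Sj : 'I_m -> scorevec -> Prop)
  (C : {set Y} -> profile -> {set Y}) : Prop :=
  forall (y y' : Y) (z : profile), inS Sj z ->
    (forall j, z j y' < z j y) -> [set y] = C [set y; y'] z.

Definition model_choice_reversal (Sj : 'I_m -> scorevec -> Prop)
  (C : {set Y} -> profile -> {set Y}) : Prop :=
  forall (y y' : Y) (z z' : profile), inS Sj z -> inS Sj z' ->
    y \in C [set y; y'] z -> y' \notin C [set y; y'] z ->
    y' \in C [set y; y'] z' ->
    exists j, z j y' < z j y /\ z' j y < z' j y'.

End Defs.

(* Main.v *)
Require Import Defs.
From mathcomp Require Import all_boot all_order all_algebra.
From mathcomp Require Import reals.
Import Order.TTheory GRing.Theory Num.Theory.
Local Open Scope ring_scope.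

Theorem lemma4 (R : realType) (Y : finType) (m : nat)
  (Sj : 'I_m -> scorevec R Y -> Prop)
  (C : {set Y} -> profile R Y m -> {set Y}) :
  (0 < #|Y|)%N -> (2 <= m)%N ->
  (forall z : profile R Y m, inS Sj z ->
     exists P : Y -> Y -> Prop, strict_ordering P /\ forall j, Wbar P (z j)) ->
  ensemble_choice_aggregator Sj C ->
  ensemble_unanimity Sj C ->
  model_choice_reversal Sj C.
Proof.
move=> _ hm hP _ hU y y' z z' hz hz' hy hy' hy'z'.
have hyy : y <> y' by move=> e; subst y'; rewrite hy in hy'.
have hm0 : (0 < m)%N by apply: leq_trans hm.
have sym : [set y'; y] = [set y; y'] by rewrite setUC.
have [P [[_ [_ tot]] WP]] := hP z hz.
have [P' [[_ [_ tot']] WP']] := hP z' hz'.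
case: (tot y y' hyy) => Hp.
- case: (tot' y y' hyy) => Hp'.
  + have := hU y y' z' hz' (fun j => proj1 (WP' j y y') Hp').
    move=> e; move: hy'z'; rewrite -e inE => /eqP e2; by case: hyy.
  + exists (Ordinal hm0); split.
    * exact: (proj1 (WP _ y y') Hp).
    * exact: (proj1 (WP' _ y' y) Hp').
- have := hU y' y z hz (fun j => proj1 (WP j y' y) Hp).
  rewrite sym => e; move: hy; rewrite -e inE => /eqP e2; by case: hyy.
Qed.
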